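(* Let $W_{12}=\{(0,0,0),(0,0,1),(0,1,0),(1,0,0)\}\subseteq\{0,1\}^3$. Then $\Lambda(W_{12},3)=1$ and, for every integer $n\ge 4$, $$\Lambda(W_{12},n)=\frac12\binom n3 2^{n-3}.$$
   Context: The $n$-hypercube $Q_n$ is the graph on $\{0,1\}^n$ in which two sequences are adjacent iff they differ in exactly one coordinate. A $3$-subcube of $\{0,1\}^n$ is a set $C\subseteq\{0,1\}^n$ obtained by fixing $n-3$ coordinates to constant values and letting the remaining $3$ coordinates vary arbitrarily (equivalently, $Q_n[C]\cong Q_3$). For $H\subseteq\{0,1\}^3$ and $S\subseteq\{0,1\}^n$, a $3$-subcube $C$ gives a copy of $H$ in $S$ if there is a graph isomorphism $f$ from $Q_3$ to $Q_n[C]$ with $f(H)=S\cap C$. Let $\Lambda(H,S)$ be the number of $3$-subcubes giving a copy of $H$ in $S$, and $\Lambda(H,n)=\max\{\Lambda(H,S): S\subseteq\{0,1\}^n\}$ for $n\ge 3$. *)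

(* Defs.v *)
From mathcomp Require Import all_boot.
Set Implicit Arguments. Unset Strict Implicit. Unset Printing Implicit Defensive.

Definition cube (n : nat) := {ffun 'I_n -> bool}.

Definition adj (n : nat) (x y : cube n) : bool := #|[set i | x i != y i]| == 1.

Definition subcube_of (n : nat) (D : {set 'I_n}) (base : cube n) : {set cube n} :=
  [set x : cube n | [forall i, (i \notin D) ==> (x i == base i)]].

Definition is_3subcube (n : nat) (C : {set cube n}) : bool :=
  [exists D : {set 'I_n}, exists base : cube n, (#|D| == 3) && (C == subcube_of D base)].

Definition gives_copy (n : nat) (H : {set cube 3}) (S : {set cube n})
    (C : {set cube n}) : bool :=
  [exists f : {ffun cube 3 -> cube n},
     [&& injectiveb f, f @: [set: cube 3] == C,
         [forall x, forall y, adj x y == adj (f x) (f y)]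
       & f @: H == S :&: C]].

Definition LambdaS (n : nat) (H : {set cube 3}) (S : {set cube n}) : nat :=
  #|[set C : {set cube n} | is_3subcube C && gives_copy H S C]|.

Definition Lambda (H : {set cube 3}) (n : nat) : nat :=
  \max_(S : {set cube n}) LambdaS H S.

Definition mk3 (a b c : bool) : cube 3 := [ffun i : 'I_3 => nth false [:: a; b; c] i].

Definition W12 : {set cube 3} :=
  [set mk3 false false false; mk3 false false true;
       mk3 false true false; mk3 true false false].

(* Main.v *)
Require Import Defs.
From mathcomp Require Import all_boot.
From mathcomp Require Import zify.
Set Implicit Arguments. Unset Strict Implicit. Unset Printing Implicit Defensive.

Definition diff n (x y : cube n) : {set 'I_n} := [set i | x i != y i].

Lemma adjE n (x y : cube n) : adj x y = (#|diff x y| == 1).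
Proof. by []. Qed.

Lemma diffC n (x y : cube n) : diff x y = diff y x.
Proof. by apply/setP=> i; rewrite !inE eq_sym. Qed.

Lemma adjC n (x y : cube n) : adj x y = adj y x.
Proof. by rewrite !adjE diffC. Qed.

Lemma diff_eq0 n (x y : cube n) : (diff x y == set0) = (x == y).
Proof.
apply/eqP/eqP=> [H|->]; last by apply/setP=> i; rewrite !inE eqxx.
apply/ffunP=> i; apply/eqP; apply: negbNE.
by rewrite -[_ != _](@in_set _ (fun i => x i != y i)) -/(diff x y) H inE.
Qed.

Lemma eq_or_adj n (x y : cube n) : (y == x) || adj x y = (#|diff x y| <= 1).
Proof.
rewrite adjE eq_sym -diff_eq0 -cards_eq0.
by case: #|diff x y| => [|[|m]].
Qed.

Definition emb n m (e : 'I_m -> 'I_n) (w : cube n) (y : cube m) : cube n :=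
  [ffun i => if [pick k | e k == i] is Some k then y k else w i].

Lemma emb_e n m (e : 'I_m -> 'I_n) w y k : injective e -> emb e w y (e k) = y k.
Proof.
move=> ei; rewrite ffunE; case: pickP => [k' /eqP /ei -> //|/(_ k)].
by rewrite eqxx.
Qed.

Lemma emb_out n m (e : 'I_m -> 'I_n) w y i : i \notin e @: setT -> emb e w y i = w i.
Proof.
move=> Hi; rewrite ffunE; case: pickP => [k /eqP Hk|//].
by move: Hi; rewrite -Hk imset_f.
Qed.

Lemma diff_emb n m (e : 'I_m -> 'I_n) w y y' : injective e ->
  diff (emb e w y) (emb e w y') = e @: diff y y'.
Proof.
move=> ei; apply/setP=> i; rewrite inE.
case: (pickP (fun k => e k == i)) => [k /eqP <- | Hn].
  by rewrite !emb_e // mem_imset // inE.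
have Hi : i \notin e @: setT.
  by apply/imsetP=> [[k _ Hk]]; move: (Hn k); rewrite Hk eqxx.
rewrite !emb_out // eqxx; apply/esym/imsetP=> [[k _ Hk]].
by move: (Hn k); rewrite Hk eqxx.
Qed.

Lemma adj_emb n m (e : 'I_m -> 'I_n) w y y' : injective e ->
  adj (emb e w y) (emb e w y') = adj y y'.
Proof. by move=> ei; rewrite !adjE diff_emb // card_imset. Qed.

Lemma emb_inj n m (e : 'I_m -> 'I_n) w : injective e -> injective (emb e w).
Proof.
move=> ei y y' H; apply/ffunP=> k.
by have := congr1 (fun f : cube n => f (e k)) H; rewrite /= !emb_e.
Qed.

Lemma sub_emb n m (e : 'I_m -> 'I_n) w u (K : {set 'I_m}) : injective e ->
  subcube_of (e @: K) (emb e w u) =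
  emb e w @: [set y : cube m | [forall k, (k \notin K) ==> (y k == u k)]].
Proof.
move=> ei; apply/setP=> x; rewrite inE; apply/forallP/imsetP.
  move=> H; exists ([ffun k => x (e k)] : cube m).
    rewrite inE; apply/forallP=> k; apply/implyP=> kK.
    by rewrite ffunE; have := implyP (H (e k)); rewrite mem_imset // emb_e //; apply.
  apply/ffunP=> i; case: (pickP (fun k => e k == i)) => [k /eqP <- | Hn].
    by rewrite emb_e // ffunE.
  have Hi : i \notin e @: setT.
    by apply/imsetP=> [[k _ Hk]]; move: (Hn k); rewrite Hk eqxx.
  rewrite emb_out //; apply/eqP; have := implyP (H i); rewrite emb_out //; apply.
  by apply/imsetP=> [[k _ Hk]]; move: (Hn k); rewrite Hk eqxx.
case=> y; rewrite inE => /forallP Hy -> i; apply/implyP=> Hi.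
case: (pickP (fun k => e k == i)) => [k /eqP Hk | Hn].
  rewrite -Hk !emb_e //; have := implyP (Hy k); apply.
  by apply: contra Hi => kK; rewrite -Hk imset_f.
have Hi' : i \notin e @: setT.
  by apply/imsetP=> [[k _ Hk]]; move: (Hn k); rewrite Hk eqxx.
by rewrite !emb_out.
Qed.

Lemma enum_set n (D : {set 'I_n}) m : #|D| = m ->
  exists e : 'I_m -> 'I_n, injective e /\ e @: setT = D.
Proof.
move=> HD; exists (fun k => enum_val (cast_ord (esym HD) k)); split.
  by move=> k k' /enum_val_inj /cast_ord_inj.
apply/eqP; rewrite eqEcard; apply/andP; split.
  by apply/subsetP=> i /imsetP [k _ ->]; apply: (enum_valP (A := mem D)).
rewrite card_imset; first by rewrite cardsT card_ord HD.
by move=> k k' /enum_val_inj /cast_ord_inj.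
Qed.

Definition star n (S C : {set cube n}) : bool :=
  [exists v in C, [forall x in C, (x \in S) == ((x == v) || adj v x)]].

Lemma star_imset n m (g : cube m -> cube n) S (Y : {set cube m}) :
  injective g -> (forall y y', adj (g y) (g y') = adj y y') ->
  star S (g @: Y) = [exists v in Y, [forall y in Y, (g y \in S) == ((y == v) || adj v y)]].
Proof.
move=> gi ga; apply/existsP/existsP.
  case=> v' /andP [/imsetP [v vY ->] /forallP H]; exists v; rewrite vY /=.
  apply/forallP=> y; apply/implyP=> yY.
  by have := implyP (H (g y)); rewrite imset_f // inj_eq // ga; apply.
case=> v /andP [vY /forallP H]; exists (g v); rewrite imset_f //=.
apply/forallP=> x; apply/implyP=> /imsetP [y yY ->].
by rewrite inj_eq // ga; apply: (implyP (H y)).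
Qed.

Lemma card_diff n (x y : cube n) : #|diff x y| = \sum_(i < n) (x i != y i).
Proof.
rewrite -sum1_card big_mkcond /=; apply: eq_bigr => i _; rewrite inE.
by case: (x i != y i).
Qed.

Definition i0 : 'I_3 := @Ordinal 3 0 isT.
Definition i1 : 'I_3 := @Ordinal 3 1 isT.
Definition i2 : 'I_3 := @Ordinal 3 2 isT.

Lemma cube3E (y : cube 3) : y = mk3 (y i0) (y i1) (y i2).
Proof.
apply/ffunP=> i; rewrite ffunE; case: i => [[|[|[|m]]] Hi] //=;
by congr (y _); apply: val_inj.
Qed.

Lemma mk3_eq a b c a' b' c' :
  (mk3 a b c == mk3 a' b' c') = [&& a == a', b == b' & c == c'].
Proof.
apply/eqP/and3P.
  move=> H; have := congr1 (fun f : cube 3 => f i0) H;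
  have := congr1 (fun f : cube 3 => f i1) H;
  have := congr1 (fun f : cube 3 => f i2) H; rewrite !ffunE /=.
  by move=> -> -> ->.
by case=> /eqP -> /eqP -> /eqP ->.
Qed.

Definition z3 := mk3 false false false.

Lemma W12E (y : cube 3) : (y \in W12) = (y == z3) || adj z3 y.
Proof.
rewrite (cube3E y) adjE card_diff !big_ord_recr big_ord0 /=.
rewrite /W12 /z3 !inE !mk3_eq !ffunE /=.
by case: (y i0); case: (y i1); case: (y i2).
Qed.

Lemma copy_star n (S C : {set cube n}) : gives_copy W12 S C -> star S C.
Proof.
case/existsP=> f /and4P [/injectiveP fi /eqP fC /forallP fadj /eqP fW].
rewrite -fC star_imset //; last first.
  by move=> y y'; have := forallP (fadj y) y'; move/eqP.
apply/existsP; exists z3; rewrite inE /=; apply/forallP=> y; apply/implyP=> _.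
rewrite -W12E.
have : (f y \in S :&: C) = (y \in W12) by rewrite -fW mem_imset.
by rewrite inE -fC imset_f ?inE // andbT => ->.
Qed.

Lemma sub_same n (D : {set 'I_n}) b v : v \in subcube_of D b ->
  subcube_of D v = subcube_of D b.
Proof.
rewrite inE => /forallP Hv; apply/setP=> x; rewrite !inE.
apply: eq_forallb => i; case: (boolP (i \in D)) => //= iD.
by rewrite (eqP (implyP (Hv i) iD)).
Qed.

Lemma emb_self n m (e : 'I_m -> 'I_n) w : emb e w [ffun k => w (e k)] = w.
Proof.
apply/ffunP=> i; rewrite ffunE; case: pickP => [k /eqP <-|_]; by rewrite ?ffunE.
Qed.

Lemma sub_emb_full n m (e : 'I_m -> 'I_n) v : injective e ->
  subcube_of (e @: setT) v = emb e v @: setT.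
Proof.
move=> ei; have := sub_emb v [ffun k => v (e k)] setT ei; rewrite emb_self => ->.
apply/setP=> x; apply/imsetP/imsetP=> [[y _ ->]|[y _ ->]]; exists y => //.
by rewrite inE; apply/forallP=> k; rewrite inE.
Qed.

Definition xr n m (e : 'I_m -> 'I_n) (v : cube n) (y : cube m) : cube m :=
  [ffun k => y k (+) v (e k)].

Lemma xrK n m (e : 'I_m -> 'I_n) v : involutive (xr e v).
Proof. by move=> y; apply/ffunP=> k; rewrite !ffunE addbK. Qed.

Lemma adj_xr n m (e : 'I_m -> 'I_n) v y y' : adj (xr e v y) (xr e v y') = adj y y'.
Proof.
rewrite !adjE; suff -> : diff (xr e v y) (xr e v y') = diff y y' by [].
apply/setP=> k; rewrite !inE !ffunE.
by case: (v (e k)); rewrite ?addbT ?addbF //; case: (y k); case: (y' k).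
Qed.

Lemma star_copy n (S : {set cube n}) (D : {set 'I_n}) (b : cube n) : #|D| = 3 ->
  star S (subcube_of D b) -> gives_copy W12 S (subcube_of D b).
Proof.
move=> HD Hs; have /existsP [v /andP [vC Hv]] := Hs.
have [e [ei De]] := enum_set HD.
rewrite -(sub_same vC) -De sub_emb_full // in Hv *.
pose f : {ffun cube 3 -> cube n} := [ffun y => emb e v (xr e v y)].
have fi : injective f.
  move=> y y'; rewrite !ffunE => /(emb_inj ei) H.
  by rewrite -(xrK e v y) H xrK.
have fa : forall y y', adj (f y) (f y') = adj y y'.
  by move=> y y'; rewrite !ffunE adj_emb // adj_xr.
have fim : f @: setT = emb e v @: setT.
  apply/setP=> x; apply/imsetP/imsetP => [[y _ ->]|[y _ ->]].
    by exists (xr e v y); rewrite ?ffunE.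
  by exists (xr e v y); rewrite ?ffunE ?xrK.
have fz : f z3 = v.
  rewrite ffunE -[RHS](emb_self e); congr (emb e v _).
  by apply/ffunP=> k; rewrite !ffunE /=; case: k => [[|[|[|]]] ?].
have key : forall y, (f y \in S) = (y \in W12).
  move=> y; have := implyP (forallP Hv (f y)); rewrite -fim imset_f // => /(_ isT) /eqP ->.
  by rewrite W12E -fz inj_eq // fa.
apply/existsP; exists f; apply/and4P; split.
- by apply/injectiveP.
- by rewrite fim.
- by apply/forallP=> x; apply/forallP=> y; rewrite fa.
apply/eqP/setP=> x; rewrite inE -fim; apply/imsetP/andP.
  by case=> y yW ->; rewrite key imset_f.
by case=> xS /imsetP [y _ xy]; exists y; rewrite // -key -xy.
Qed.

Definition Stars n (S : {set cube n}) : {set {set cube n}} :=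
  [set C | is_3subcube C && star S C].

Lemma Lambda_star n (S : {set cube n}) : LambdaS W12 S = #|Stars S|.
Proof.
apply: eq_card => C; rewrite !inE; apply/andP/andP => [[H3 Hc]|[H3 Hs]]; split => //.
  exact: copy_star.
case/existsP: H3 => D /existsP [b /andP [/eqP HD /eqP HC]].
by rewrite HC in Hs *; apply: star_copy.
Qed.

Definition flip1 n (b : cube n) (i : 'I_n) : cube n :=
  [ffun k => if k == i then ~~ b k else b k].

Lemma submem n (D : {set 'I_n}) b : b \in subcube_of D b.
Proof. by rewrite inE; apply/forallP=> i; rewrite eqxx implybT. Qed.

Lemma sub_D n (D D' : {set 'I_n}) b b' :
  subcube_of D b = subcube_of D' b' -> D \subset D'.
Proof.
move=> H; apply/subsetP=> i iD; apply/negPn/negP=> iD'.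
have h1 : flip1 b i \in subcube_of D' b'.
  rewrite -H inE; apply/forallP=> k; apply/implyP=> kD; rewrite ffunE.
  case: (k =P i) => [ki|_ /=]; last by rewrite eqxx.
  by move: kD; rewrite ki iD.
have h2 : b \in subcube_of D' b' by rewrite -H submem.
move: h1 h2; rewrite !inE => /forallP /(_ i); rewrite iD' ffunE eqxx /=.
move=> /eqP E1 /forallP /(_ i); rewrite iD' /= -E1.
by case: (b i).
Qed.

Lemma card_sub n (D : {set 'I_n}) b : #|subcube_of D b| = 2 ^ #|D|.
Proof.
have [e [ei De]] := enum_set (erefl #|D|).
rewrite -{1}De sub_emb_full // card_imset; last exact: emb_inj.
by rewrite cardsT card_ffun card_bool card_ord.
Qed.

Definition st n (S : {set cube n}) (D : {set 'I_n}) (b : cube n) : nat :=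
  star S (subcube_of D b).

Lemma count8 n (S : {set cube n}) :
  \sum_(D : {set 'I_n} | #|D| == 3) \sum_(b : cube n) st S D b = 8 * #|Stars S|.
Proof.
rewrite (pair_big (fun D : {set 'I_n} => #|D| == 3) xpredT) /=.
rewrite (eq_bigr (fun p => if star S (subcube_of p.1 p.2) then 1 else 0)); last first.
  by move=> p _; rewrite /st; case: star.
rewrite -big_mkcondr /=.
rewrite (partition_big (fun p => subcube_of p.1 p.2) (fun C => C \in Stars S)); last first.
  move=> p /andP [/andP [H3 _] Hs]; rewrite inE Hs andbT.
  by apply/existsP; exists p.1; apply/existsP; exists p.2; rewrite H3 eqxx.
rewrite mulnC -sum_nat_const; apply: eq_bigr => C.
rewrite inE => /andP [/existsP [D0 /existsP [b0 /andP [/eqP H3 /eqP HC]]] Hs].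
rewrite sum1dep_card -[8]/(1 * 2 ^ 3) -H3 -(card_sub D0 b0) -(cards1 D0) -cardsX.
apply: eq_card => -[D b]; rewrite in_setX in_set1 -HC [X in X = _]inE /=.
apply/idP/andP.
  case/andP=> /andP [_ _] /eqP Hp; rewrite -Hp submem.
  have e1 : D = D0.
    rewrite HC in Hp.
    by apply/eqP; rewrite eqEsubset (sub_D (esym Hp)) (sub_D Hp).
  by rewrite e1 eqxx.
case=> /eqP e1 pC; rewrite HC in pC.
have Hp : subcube_of D b = C by rewrite e1 HC (sub_same pC).
by rewrite Hp eqxx e1 H3 eqxx Hs.
Qed.

Definition I16 := iota 0 16.
Arguments I16 : simpl never.
Lemma memI16 i : (i \in I16) = (i < 16). Proof. by rewrite mem_iota. Qed.
Lemma sizeI16 : size I16 = 16. Proof. by rewrite size_iota. Qed.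
Lemma nthI16 i : i < 16 -> nth 0 I16 i = i. Proof. by move=> H; rewrite nth_iota. Qed.

Definition dec (i : nat) : cube 4 := [ffun k : 'I_4 => odd (i %/ 2 ^ k)].

Definition hd (i j : nat) : nat :=
  (odd (i %/ 2 ^ 0) != odd (j %/ 2 ^ 0)) + (odd (i %/ 2 ^ 1) != odd (j %/ 2 ^ 1)) +
  (odd (i %/ 2 ^ 2) != odd (j %/ 2 ^ 2)) + (odd (i %/ 2 ^ 3) != odd (j %/ 2 ^ 3)).

Lemma recon i : i < 16 -> i = odd (i %/ 2 ^ 0) + 2 * odd (i %/ 2 ^ 1) +
  4 * odd (i %/ 2 ^ 2) + 8 * odd (i %/ 2 ^ 3).
Proof.
have H : all (fun i => i == odd (i %/ 2 ^ 0) + 2 * odd (i %/ 2 ^ 1) +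
  4 * odd (i %/ 2 ^ 2) + 8 * odd (i %/ 2 ^ 3)) (I16) by rewrite /I16.
by move=> Hi; apply/eqP; apply: (allP H); rewrite memI16.
Qed.

Definition o0 : 'I_4 := @Ordinal 4 0 isT.
Definition o1 : 'I_4 := @Ordinal 4 1 isT.
Definition o2 : 'I_4 := @Ordinal 4 2 isT.
Definition o3 : 'I_4 := @Ordinal 4 3 isT.

Lemma dec_inj i j : i < 16 -> j < 16 -> dec i = dec j -> i = j.
Proof.
move=> Hi Hj H; rewrite (recon Hi) (recon Hj).
have := congr1 (fun f : cube 4 => f o0) H; have := congr1 (fun f : cube 4 => f o1) H;
have := congr1 (fun f : cube 4 => f o2) H; have := congr1 (fun f : cube 4 => f o3) H.
by rewrite !ffunE /= => -> -> -> ->.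
Qed.

Lemma dec_surj (v : cube 4) : exists2 i, i < 16 & dec i = v.
Proof.
pose g (i : 'I_16) := dec i.
have gi : injective g by move=> i j /dec_inj H; apply: val_inj; apply: H.
have : g @: setT = setT.
  apply/eqP; rewrite eqEcard subsetT /= card_imset // !cardsT card_ffun card_bool.
  by rewrite !card_ord.
move/setP/(_ v); rewrite inE => /imsetP [i _ ->]; by exists i.
Qed.

Lemma adj_dec i j : adj (dec i) (dec j) = (hd i j == 1).
Proof. by rewrite adjE card_diff !big_ord_recr big_ord0 /= !ffunE /= add0n. Qed.

Definition star4 (P : cube 4 -> bool) (k : 'I_4) (b : bool) : bool :=
  [exists v in [set y : cube 4 | y k == b],
     [forall y in [set y : cube 4 | y k == b], P y == ((y == v) || adj v y)]].

Definition st4c (l : seq bool) (k : nat) (b : bool) : bool :=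
  has (fun i => (odd (i %/ 2 ^ k) == b) && all (fun j => (odd (j %/ 2 ^ k) == b) ==>
    (nth false l j == ((j == i) || (hd i j == 1)))) (I16)) (I16).

Lemma bridge (P : cube 4 -> bool) (k : 'I_4) b :
  star4 P k b = st4c [seq P (dec j) | j <- I16] k b.
Proof.
rewrite /st4c.
have := memI16; have := sizeI16; have := nthI16; move: I16 => s Hn Hsz Hm.
apply/existsP/hasP.
  case=> v /andP []; rewrite inE => /eqP Hv /forallP H; subst b.
  have [i Hi Hiv] := dec_surj v; subst v; exists i; first by rewrite Hm.
  rewrite !ffunE eqxx andTb; apply/allP=> j; rewrite Hm => Hj.
  apply/implyP=> Hb; have := implyP (H (dec j)); rewrite inE !ffunE Hb => /(_ isT).
  rewrite (nth_map 0) ?Hsz // Hn // adj_dec.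
  suff -> : (dec j == dec i) = (j == i) by [].
  by apply/eqP/eqP => [/dec_inj|->]; [apply|].
case=> i; rewrite Hm => Hi /andP [Hb /allP H].
exists (dec i); rewrite inE ffunE Hb andTb; apply/forallP=> y; apply/implyP.
have [j Hj <-] := dec_surj y; rewrite inE ffunE => Hbj.
have := implyP (H j _) Hbj; rewrite Hm Hj => /(_ isT).
rewrite (nth_map 0) ?Hsz // Hn // adj_dec.
suff -> : (dec j == dec i) = (j == i) by [].
by apply/eqP/eqP => [/dec_inj|->]; [apply|].
Qed.

Fixpoint lists (n : nat) : seq (seq bool) :=
  if n is n'.+1 then [seq b :: l | b <- [:: true; false], l <- lists n'] else [:: [::]].

Lemma lists_all l : l \in lists (size l).
Proof.
elim: l => [|b l IH] //.
have -> : lists (size (b :: l)) =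
  [seq b :: l | b <- [:: true; false], l <- lists (size l)] by [].
by rewrite (allpairs_f (fun b l => b :: l)) //; case: b.
Qed.

Lemma has_filter2 (T : Type) (a q : pred T) s :
  has a (filter q s) = has (fun x => q x && a x) s.
Proof. by elim: s => //= x s IH; case: (q x) => //=; rewrite IH. Qed.

Lemma eqmap_all (T : Type) (U : eqType) (f g : T -> U) s :
  (map f s == map g s) = all (fun x => f x == g x) s.
Proof. by elim: s => //= x s IH; rewrite eqseq_cons IH. Qed.

Definition fpos (k : nat) (b : bool) : seq nat := [seq j <- I16 | odd (j %/ 2 ^ k) == b].

Definition fF (k : nat) (b : bool) : seq nat * seq (seq bool) :=
  (fpos k b, [seq [seq (j == i) || (hd i j == 1) | j <- fpos k b] | i <- fpos k b]).

Definition stf (F : seq nat * seq (seq bool)) (l : seq bool) : bool :=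
  (fun v => has (fun p => v == p) F.2) [seq nth false l j | j <- F.1].

Lemma st4c_f l k b : st4c l k b = stf (fF k b) l.
Proof.
rewrite /stf /fF has_map /st4c /fpos; move: I16 => s; rewrite has_filter2.
apply: eq_has => i; apply: andb_id2l => _.
cbv beta delta [preim]; cbn [fst].
by rewrite /= eqmap_all all_filter.
Qed.

Definition sumF (F0 F1 F2 F3 F4 F5 F6 F7 : seq nat * seq (seq bool)) (l : seq bool) :=
  stf F0 l + stf F1 l + (stf F2 l + stf F3 l + (stf F4 l + stf F5 l + (stf F6 l + stf F7 l + 0))).

Lemma check_all : (fun F0 F1 F2 F3 F4 F5 F6 F7 =>
  all (fun l => sumF F0 F1 F2 F3 F4 F5 F6 F7 l <= 4) (lists 16))
  (fF 0 true) (fF 0 false) (fF 1 true) (fF 1 false)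
  (fF 2 true) (fF 2 false) (fF 3 true) (fF 3 false) = true.
Proof. vm_compute. reflexivity. Qed.

Lemma Q4 (P : cube 4 -> bool) :
  \sum_(k < 4) (star4 P k true + star4 P k false) <= 4.
Proof.
set l := [seq P (dec j) | j <- I16].
rewrite (eq_bigr (fun k : 'I_4 => st4c l k true + st4c l k false)); last first.
  by move=> k _; rewrite !bridge.
rewrite -(big_mkord xpredT (fun k => st4c l k true + st4c l k false)).
rewrite (big_ltn (isT : 0 < 4)) (big_ltn (isT : 1 < 4)) (big_ltn (isT : 2 < 4)) (big_ltn (isT : 3 < 4)) (big_geq (isT : 4 <= 4)).
rewrite !st4c_f.
have Hl : l \in lists 16 by rewrite -[16]sizeI16 -(size_map (fun j => P (dec j))) lists_all.
have H : all (fun l => sumF (fF 0 true) (fF 0 false) (fF 1 true) (fF 1 false)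
  (fF 2 true) (fF 2 false) (fF 3 true) (fF 3 false) l <= 4) (lists 16) := check_all.
exact: (allP H l Hl).
Qed.

Lemma facet n (e : 'I_4 -> 'I_n) w u k : injective e ->
  subcube_of (e @: setT :\ e k) (emb e w u) = emb e w @: [set y : cube 4 | y k == u k].
Proof.
move=> ei.
have -> : e @: setT :\ e k = e @: (setT :\ k).
  apply/setP=> i; rewrite !inE; apply/andP/imsetP.
    by case=> ik /imsetP [k' _ Hi]; subst i; exists k' => //; rewrite !inE andbT; apply/negP => /eqP Hk; move: ik; rewrite Hk eqxx.
  by case=> k' ; rewrite !inE andbT => kk ->; rewrite imset_f // inj_eq // kk.
rewrite sub_emb //.
have -> : [set y : cube 4 | [forall k', (k' \notin setT :\ k) ==> (y k' == u k')]] =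
          [set y : cube 4 | y k == u k].
  apply/setP=> y; rewrite !inE; apply/forallP/idP => [H|H k'].
    by have := H k; rewrite !inE eqxx.
  by rewrite !inE andbT negbK; apply/implyP => /eqP ->.
by [].
Qed.

Definition flipE n (E : {set 'I_n}) (b : cube n) : cube n := [ffun i => (i \in E) (+) b i].

Lemma flipEK n (E : {set 'I_n}) : involutive (flipE E).
Proof. by move=> b; apply/ffunP=> i; rewrite !ffunE addKb. Qed.

Lemma flip_pair n (S : {set cube n}) (E : {set 'I_n}) b : #|E| = 4 ->
  \sum_(j in E) st S (E :\ j) b + \sum_(j in E) st S (E :\ j) (flipE E b) <= 4.
Proof.
move=> HE; have [e [ei De]] := enum_set HE.
pose P := fun y : cube 4 => emb e b y \in S.
have Hst : forall (u : cube 4) k, st S (E :\ e k) (emb e b u) = star4 P k (u k).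
  move=> u k; rewrite /st -De facet // star_imset //.
    exact: emb_inj.
  by move=> y y'; rewrite adj_emb.
have Hb : b = emb e b [ffun k => b (e k)] by rewrite emb_self.
have Hf : flipE E b = emb e b [ffun k => ~~ b (e k)].
  apply/ffunP=> i; rewrite !ffunE; case: pickP => [k /eqP <-|Hn].
    by rewrite -De imset_f // ffunE.
  have -> // : i \in E = false.
  by rewrite -De; apply/imsetP=> [[k _ Hk]]; move: (Hn k); rewrite Hk eqxx.
rewrite -De !big_imset /=; try by move=> x y _ _; apply: ei.
rewrite De -big_split /=.
apply: leq_trans (Q4 P); rewrite leq_eqVlt; apply/orP; left; apply/eqP.
apply: eq_big => [k|k _]; first by rewrite inE.
rewrite {1}Hb Hf !Hst !ffunE.
by case: (b (e k)) => //=; rewrite addnC.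
Qed.

Lemma sumE_bound n (S : {set cube n}) (E : {set 'I_n}) : #|E| = 4 ->
  \sum_(b : cube n) \sum_(j in E) st S (E :\ j) b <= 2 ^ n.+1.
Proof.
move=> HE.
have H2 : 2 * (\sum_(b : cube n) \sum_(j in E) st S (E :\ j) b) =
  \sum_(b : cube n) (\sum_(j in E) st S (E :\ j) b + \sum_(j in E) st S (E :\ j) (flipE E b)).
  rewrite big_split /= mul2n -addnn; congr (_ + _).
  exact: (reindex_inj (can_inj (flipEK E))).
have : \sum_(b : cube n) (\sum_(j in E) st S (E :\ j) b + \sum_(j in E) st S (E :\ j) (flipE E b))
  <= \sum_(b : cube n) 4 by apply: leq_sum => b _; apply: flip_pair.
rewrite -H2 sum_nat_const card_ffun card_bool card_ord expnS; lia.
Qed.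

Lemma upper n (S : {set cube n}) : (n - 3) * (8 * #|Stars S|) <= 'C(n, 4) * 2 ^ n.+1.
Proof.
rewrite -count8 big_distrr /=.
rewrite (eq_bigr (fun D => \sum_(j in ~: D) \sum_(b : cube n) st S D b)); last first.
  move=> D /eqP HD; rewrite sum_nat_const; congr (_ * _).
  by have := cardsC D; rewrite HD card_ord; lia.
rewrite (exchange_big_dep xpredT) //=.
rewrite (eq_bigr (fun j : 'I_n => \sum_(E : {set 'I_n} | (#|E| == 4) && (j \in E)) \sum_(b : cube n) st S (E :\ j) b)); last first.
  move=> j _; rewrite (reindex_onto (fun E => E :\ j) (fun D => j |: D)) /=.
    apply: eq_bigl => E; case: (boolP (j \in E)) => jE.
      rewrite setD1K // eqxx andbT in_setC setD11 andbT (cardsD1 j E) jE.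
      by rewrite andbT /= add1n eqSS.
    rewrite andbF; apply/negbTE; rewrite negb_and; apply/orP; right.
    by apply/negP => /eqP H; move: jE; rewrite -H setU11.
  move=> D; rewrite in_setC => /andP [_ jD]; apply/setP=> i; rewrite !inE.
  by case: (i =P j) => [->|]; rewrite ?(negbTE jD) //= andbT.
rewrite (exchange_big_dep (fun E : {set 'I_n} => #|E| == 4)) /=; last by move=> j E _ /andP [].
apply: (@leq_trans (\sum_(E : {set 'I_n} | #|E| == 4) 2 ^ n.+1)).
  apply: leq_sum => E /eqP HE.
  rewrite (eq_bigl (fun j => j \in E)); last by move=> j; rewrite /= HE eqxx.
  by rewrite exchange_big /=; apply: sumE_bound.
rewrite (eq_bigl (fun E => E \in [set E : {set 'I_n} | #|E| == 4])); last by move=> E; rewrite inE.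
by rewrite sum_nat_const card_draws card_ord.
Qed.

Lemma upper2 n (S : {set cube n}) : 4 <= n -> 2 * LambdaS W12 S <= 'C(n, 3) * 2 ^ (n - 3).
Proof.
move=> Hn; have H := upper S; rewrite -Lambda_star in H.
have Hb := mul_bin_left n 3.
have Hp : 2 ^ n.+1 = 16 * 2 ^ (n - 3).
  by rewrite -[16]/(2 ^ 4) -expnD; congr (_ ^ _); lia.
rewrite Hp in H; move: H Hb; move: (LambdaS W12 S) ('C(n, 3)) ('C(n, 4)) (2 ^ (n - 3)).
move=> L C3 C4 P H Hb; nia.
Qed.

Definition wt n (x : cube n) : nat := #|[set i | x i]|.
Definition S0 n : {set cube n} := [set x : cube n | wt x %% 4 < 2].
Definition proj n (D : {set 'I_n}) (b : cube n) : cube n := [ffun i => (i \notin D) && b i].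

Lemma proj_mem n (D : {set 'I_n}) b : proj D b \in subcube_of D b.
Proof. by rewrite inE; apply/forallP=> i; apply/implyP=> iD; rewrite ffunE iD. Qed.

Lemma star_S0 n (D : {set 'I_n}) b : #|D| = 3 -> ~~ odd (wt (proj D b)) ->
  star (S0 n) (subcube_of D (proj D b)).
Proof.
move=> HD; set c := proj D b => Hev.
have cD : forall i, i \in D -> c i = false by move=> i iD; rewrite ffunE iD.
have key : forall x, x \in subcube_of D c ->
    wt x = #|[set i | x i] :&: D| + wt c.
  move=> x; rewrite inE => /forallP Hx; rewrite /wt -(cardsID D [set i | x i]).
  congr (_ + _); apply: eq_card => i; rewrite !inE.
  case: (boolP (i \in D)) => iD /=; first by rewrite cD.
  by rewrite (eqP (implyP (Hx i) iD)).
have mle : forall x : cube n, #|[set i | x i] :&: D| <= 3.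
  by move=> x; rewrite -HD subset_leq_card // subsetIr.
have Hw2 : wt c %% 2 = 0 by rewrite modn2; case: odd Hev.
case: (eqVneq (wt c %% 4) 0) => Hw.
  apply/existsP; exists c; rewrite submem /=; apply/forallP => x; apply/implyP => xC.
  rewrite eq_or_adj.
  have -> : diff c x = [set i | x i] :&: D.
    apply/setP=> i; rewrite !inE; case: (boolP (i \in D)) => iD /=; first by rewrite (cD i iD) andbT; case: (x i).
    by move: xC; rewrite inE => /forallP /(_ i); rewrite iD /= => /eqP ->; rewrite eqxx andbF.
  rewrite inE (key x xC); have := mle x.
  move: #|[set i | x i] :&: D| => m Hm; apply/eqP; apply/idP/idP; lia.
move/eqP: Hw => Hw.
pose top : cube n := [ffun i => (i \in D) || c i].
have topC : top \in subcube_of D c.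
  by rewrite inE; apply/forallP=> i; apply/implyP=> iD; rewrite ffunE (negbTE iD).
apply/existsP; exists top; rewrite topC /=; apply/forallP => x; apply/implyP => xC.
rewrite eq_or_adj.
have -> : diff top x = D :\: [set i | x i].
  apply/setP=> i; rewrite !inE ffunE; case: (boolP (i \in D)) => iD /=; first by case: (x i).
  by move: xC; rewrite inE => /forallP /(_ i); rewrite iD /= => /eqP ->; rewrite eqxx andbF.
have := cardsID [set i | x i] D; rewrite HD setIC.
rewrite inE (key x xC); have := mle x.
move: #|[set i | x i] :&: D| => m Hm Hs; move: (wt c) Hw Hw2 #|D :\: [set i | x i]| Hs => w Hw Hw2 k Hs; apply/eqP; apply/idP/idP; lia.
Qed.

Lemma st_S0 n (D : {set 'I_n}) b : #|D| = 3 -> ~~ odd (wt (proj D b)) <= st (S0 n) D b.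
Proof.
move=> HD; case: (boolP (odd _)) => //= Hev.
by rewrite /st -(sub_same (proj_mem D b)) star_S0 // Hev.
Qed.

Lemma flip1K n (j : 'I_n) : involutive (fun b : cube n => flip1 b j).
Proof. by move=> b; apply/ffunP=> i; rewrite !ffunE; case: eqP => //= _; rewrite negbK. Qed.

Lemma parity n (D : {set 'I_n}) j b : j \notin D ->
  odd (wt (proj D (flip1 b j))) = ~~ odd (wt (proj D b)).
Proof.
move=> jD; rewrite /wt (cardsD1 j [set i | proj D (flip1 b j) i]) (cardsD1 j [set i | proj D b i]).
have -> : [set i | proj D (flip1 b j) i] :\ j = [set i | proj D b i] :\ j.
  by apply/setP=> i; rewrite !inE !ffunE; case: eqP.
rewrite !inE !ffunE eqxx jD /=.
by case: (b j); rewrite /= ?add1n ?add0n //= negbK.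
Qed.

Lemma even_count n (D : {set 'I_n}) j : j \notin D ->
  2 * \sum_(b : cube n) ~~ odd (wt (proj D b)) = 2 ^ n.
Proof.
move=> jD.
have E1 : \sum_(b : cube n) ~~ odd (wt (proj D b)) = \sum_(b : cube n) odd (wt (proj D b)).
  rewrite (reindex_inj (can_inj (flip1K j))); apply: eq_bigr => b _.
  by rewrite parity // negbK.
rewrite mul2n -addnn {2}E1 -big_split /=.
rewrite (eq_bigr (fun _ => 1)); last by move=> b _; case: odd.
by rewrite sum1_card card_ffun card_bool card_ord.
Qed.

Lemma lower n : 4 <= n -> 'C(n, 3) * 2 ^ (n - 3) <= 2 * LambdaS W12 (S0 n).
Proof.
move=> Hn; rewrite Lambda_star.
suff H : 'C(n, 3) * 2 ^ n <= 2 * (8 * #|Stars (S0 n)|).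
  have Hp : 2 ^ n = 8 * 2 ^ (n - 3).
    by rewrite -[8]/(2 ^ 3) -expnD; congr (_ ^ _); lia.
  rewrite Hp in H; move: H; move: ('C(n, 3)) (2 ^ (n - 3)) #|Stars (S0 n)| => C P L H; nia.
rewrite -count8 big_distrr /=.
rewrite (eq_bigl (fun D => D \in [set D : {set 'I_n} | #|D| == 3])); last by move=> D; rewrite inE.
have Hc : 'C(n, 3) = #|[set D : {set 'I_n} | #|D| == 3]| by rewrite card_draws card_ord.
rewrite Hc -sum_nat_const; apply: leq_sum => D; rewrite inE => /eqP HD.
have [j jD] : exists j, j \notin D.
  case: (pickP (fun j => j \notin D)) => [j Hj|H]; first by exists j.
  have : #|D| = #|'I_n| by apply: eq_card => i; rewrite (negbFE (H i)).
  by rewrite HD card_ord; lia.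
rewrite -(even_count jD) leq_mul2l /=; apply: leq_sum => b _; exact: st_S0.
Qed.

Lemma Lambda_n n : 4 <= n -> 2 * Lambda W12 n = 'C(n, 3) * 2 ^ (n - 3).
Proof.
move=> Hn; rewrite /Lambda; apply/eqP; rewrite eqn_leq; apply/andP; split.
  have Hpos : 0 < #|{set cube n}| by apply/card_gt0P; exists set0.
  have [S1 ->] := eq_bigmax (LambdaS W12 (n := n)) Hpos.
  exact: upper2.
apply: leq_trans (lower Hn) _; rewrite leq_mul2l /=.
exact: (leq_bigmax (F := LambdaS W12 (n := n))).
Qed.

Lemma Lambda_3 : Lambda W12 3 = 1.
Proof.
rewrite /Lambda; apply/eqP; rewrite eqn_leq; apply/andP; split.
  apply/bigmax_leqP => S _; rewrite Lambda_star.
  have : 8 * #|Stars S| <= 8 * 1; last by rewrite leq_mul2l.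
  rewrite -count8.
  rewrite (eq_bigl (fun D => D \in [set D : {set 'I_3} | #|D| == 3])); last by move=> D; rewrite inE.
  apply: (@leq_trans (\sum_(D in [set D : {set 'I_3} | #|D| == 3]) 8)).
    apply: leq_sum => D _; apply: (@leq_trans (\sum_(b : cube 3) 1)).
      by apply: leq_sum => b _; rewrite /st; case: star.
    by rewrite sum1_card card_ffun card_bool card_ord.
  by rewrite sum_nat_const card_draws card_ord.
apply: leq_trans (leq_bigmax (F := LambdaS W12 (n := 3)) W12); rewrite Lambda_star.
rewrite card_gt0; apply/set0Pn; exists setT; rewrite inE; apply/andP; split.
  apply/existsP; exists setT; apply/existsP; exists z3; rewrite cardsT card_ord eqxx /=.
  by apply/eqP/setP=> x; rewrite !inE; apply/esym/forallP=> i; rewrite inE.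
apply/existsP; exists z3; rewrite inE /=; apply/forallP=> x; rewrite inE /=.
by rewrite W12E.
Qed.

(* Λ(W12,n) = (1/2) C(n,3) 2^(n-3), stated multiplied by 2 (exact in nat). *)
Theorem theorem1p2 :
  Lambda W12 3 = 1 /\
  forall n : nat, 4 <= n -> 2 * Lambda W12 n = 'C(n, 3) * 2 ^ (n - 3).
Proof.
split; first exact: Lambda_3.
exact: Lambda_n.
Qed.
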